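(* Consider the following single-relay network model. Let $q$ be a prime power, $K\ge1$, $N_{\mathrm S}\ge K$, $N_{\mathrm R}\ge1$. A source S draws $N_{\mathrm S}$ coefficient vectors i.i.d. uniformly from $\mathbb{F}_q^K$ and broadcasts one packet per vector; each packet is erased on the link S$\to$D with probability $\epsilon_{\mathrm{SD}}$ and on the link S$\to$R with probability $\epsilon_{\mathrm{SR}}$, all erasures independent and independent of the coefficients. The relay R, having received $m_1$ packets with coefficient matrix $\mathbf{C}_{\mathrm S\to\mathrm R}\in\mathbb{F}_q^{m_1\times K}$, draws $\mathbf{G}\in\mathbb{F}_q^{N_{\mathrm R}\times m_1}$ with i.i.d. uniform entries and transmits the $N_{\mathrm R}$ rows of $\mathbf{G}\mathbf{C}_{\mathrm S\to\mathrm R}$ to D, each independently erased with probability $\epsilon_{\mathrm{RD}}$. D stacks all coefficient vectors received into $\mathbf{C}_{\mathrm D}$; decoding succeeds iff $\operatorname{rank}(\mathbf{C}_{\mathrm D})=K$, and $P^{(1)}_{\mathrm R}$ denotes its probability. Then $$P^{(1)}_{\mathrm R}=\sum_{(m,m_{\mathrm D},m_{\mathrm{RD}})}\alpha(m,m_{\mathrm D},m_{\mathrm{RD}})\sum_{m'}\mathcal{B}(m',N_{\mathrm R},\epsilon_{\mathrm{RD}})\;\mathbb{P}^{(2)}\big(m'+m_{\mathrm D},\,m-m_{\mathrm{RD}}+m_{\mathrm D},\,m_{\mathrm D};K\big),$$ where $$\alpha(m,m_{\mathrm D},m_{\mathrm{RD}})=\binom{N_{\mathrm S}}{m_{\mathrm{RD}}}\binom{N_{\mathrm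 S}-m_{\mathrm{RD}}}{m-m_{\mathrm{RD}}}\binom{N_{\mathrm S}-m}{m_{\mathrm D}-m_{\mathrm{RD}}}(1-\epsilon_{\mathrm{SR}})^{m}\epsilon_{\mathrm{SR}}^{\,N_{\mathrm S}-m}(1-\epsilon_{\mathrm{SD}})^{m_{\mathrm D}}\epsilon_{\mathrm{SD}}^{\,N_{\mathrm S}-m_{\mathrm D}},$$ $\mathcal{B}(k,N,\epsilon)=\binom{N}{k}(1-\epsilon)^k\epsilon^{N-k}$, the sums range over integers with $m+m_{\mathrm D}\ge K$, $m,m_{\mathrm D}\le N_{\mathrm S}$, $\max(0,m+m_{\mathrm D}-N_{\mathrm S})\le m_{\mathrm{RD}}\le\min(m,m_{\mathrm D})$, and $\max(0,K-m_{\mathrm D})\le m'\le N_{\mathrm R}$; and $\mathbb{P}^{(2)}(m_1,m_2,m_{12};K)=\sum_{i=\max(0,K-m_1+m_{12},K-m_2+m_{12})}^{\min(m_{12},K)}\mathbb{P}_i(m_{12},K)\,\mathbb{P}(m_1-m_{12},K-i)\,\mathbb{P}(m_2-m_{12},K-i)$ with $\mathbb{P}(a,b)=\prod_{i=0}^{b-1}(1-q^{i-a})$ and $\mathbb{P}_r(a,b)=q^{-a(b-r)}\prod_{i=0}^{r-1}\frac{q^{b-i}-1}{q^{r-i}-1}\prod_{i=0}^{r-1}(1-q^{i-a})$.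
   Context: $\mathbb{P}(a,b)$ (resp. $\mathbb{P}_r(a,b)$) is the probability that an $a\times b$ matrix with i.i.d. uniform entries from $\mathbb{F}_q$ has rank $b$ (resp. $r$). In the sum, $m$ is the number of source packets received by R, $m_{\mathrm D}$ the number received by D from S, $m_{\mathrm{RD}}$ the number received by both, and $m'$ the number of recoded packets D receives from R. *)

(* Defs.v *)
From HB Require Import structures.
From mathcomp Require Import all_boot all_order all_algebra.
Set Implicit Arguments. Unset Strict Implicit. Unset Printing Implicit Defensive.
Import Order.TTheory GRing.Theory Num.Theory.
Local Open Scope ring_scope.

Section Defs.
Variable R : realFieldType.

Definition unif_avg (T : finType) (f : T -> R) : R :=
  (#|T|%:R)^-1 * \sum_(x : T) f x.

Definition erasure_wt (eps : R) (n : nat) (S : {set 'I_n}) : R :=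
  (1 - eps) ^+ #|S| * eps ^+ (n - #|S|).

Definition rows_of (F : fieldType) (n K : nat) (S : {set 'I_n})
    (C : 'M[F]_(n, K)) : 'M[F]_(#|S|, K) :=
  rowsub (fun i : 'I_#|S| => enum_val i) C.

(* Decoding success probability P_R^(1) of the single-relay model:
   C : source coefficient matrix (N_S rows, i.i.d. uniform in F^K),
   A : packets received by R, D : packets received by D from S,
   E : recoded packets received by D from R, G : relay recoding matrix
   (N_R x #|A|, i.i.d. uniform). *)
Definition P1R (F : finFieldType) (K NS NR : nat) (eSD eSR eRD : R) : R :=
  unif_avg (fun C : 'M[F]_(NS, K) =>
    \sum_(A : {set 'I_NS}) \sum_(D : {set 'I_NS}) \sum_(E : {set 'I_NR})
      erasure_wt eSR A * erasure_wt eSD D * erasure_wt eRD E *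
      unif_avg (fun G : 'M[F]_(NR, #|A|) =>
        ((\rank (col_mx (rows_of D C) (rows_of E (G *m rows_of A C))) == K
          :> nat)%:R))).

Definition Pfull (q : R) (a b : nat) : R :=
  \prod_(0 <= i < b) (1 - q ^ (i%:Z - a%:Z)).

Definition Prank (q : R) (r a b : nat) : R :=
  q ^ (- (a%:Z * (b%:Z - r%:Z))) *
  (\prod_(0 <= i < r) ((q ^ (b%:Z - i%:Z) - 1) / (q ^ (r%:Z - i%:Z) - 1))) *
  \prod_(0 <= i < r) (1 - q ^ (i%:Z - a%:Z)).

(* P^(2)(m1,m2,m12;K); the lower bound (K + m12) - m1 etc. in truncated nat
   subtraction equals max(0, K - m1 + m12). *)
Definition P2 (q : R) (m1 m2 m12 K : nat) : R :=
  \sum_(maxn (K + m12 - m1) (K + m12 - m2) <= i < (minn m12 K).+1)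
    Prank q i m12 K * Pfull q (m1 - m12) (K - i) * Pfull q (m2 - m12) (K - i).

Definition Bin (k N : nat) (eps : R) : R :=
  'C(N, k)%:R * (1 - eps) ^+ k * eps ^+ (N - k).

Definition alpha (NS : nat) (eSR eSD : R) (m mD mRD : nat) : R :=
  'C(NS, mRD)%:R * 'C(NS - mRD, m - mRD)%:R * 'C(NS - m, mD - mRD)%:R *
  (1 - eSR) ^+ m * eSR ^+ (NS - m) * (1 - eSD) ^+ mD * eSD ^+ (NS - mD).

(* Right-hand side; nat truncated subtractions in the lower bounds encode
   max(0, m + mD - NS) and max(0, K - mD). *)
Definition P1R_formula (q : R) (K NS NR : nat) (eSD eSR eRD : R) : R :=
  \sum_(m < NS.+1) \sum_(mD < NS.+1 | (K <= m + mD)%N)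
    \sum_(m + mD - NS <= mRD < (minn m mD).+1)
      alpha NS eSR eSD m mD mRD *
      \sum_(K - mD <= m' < NR.+1)
        Bin m' NR eRD * P2 q (m' + mD) (m - mRD + mD) mD K.

End Defs.

(* Main.v *)
Require Import Defs.
From HB Require Import structures.
From mathcomp Require Import all_boot all_order all_algebra.
From mathcomp Require Import ring lra zify.
Set Implicit Arguments. Unset Strict Implicit. Unset Printing Implicit Defensive.
Import Order.TTheory GRing.Theory Num.Theory.
Local Open Scope ring_scope.
Section LA.
Variable F : finFieldType.
Local Notation q := #|F|.

Lemma card_subrow n m (M : 'M[F]_(m,n)) :
  #|[set v : 'rV[F]_n | (v <= M)%MS]| = (q ^ \rank M)%N.
Proof.
have -> : [set v : 'rV[F]_n | (v <= M)%MS] =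
   [set w *m row_base M | w : 'rV[F]_(\rank M)].
  apply/setP => v; rewrite inE; apply/idP/imsetP.
  - rewrite -(eq_row_base M) => /submxP [w ->]; by exists w.
  - by move=> [w _ ->]; apply: submx_trans (submxMl _ _) _; rewrite eq_row_base.
rewrite card_imset; last exact: row_free_inj (row_base_free M).
by rewrite card_mx mul1n.
Qed.

Lemma rank_addrow m n (X : 'M[F]_(m,n)) (v : 'rV[F]_n) :
  \rank (col_mx X v) = (\rank X + ~~ (v <= X)%MS)%N.
Proof.
rewrite -addsmxE; case: (boolP (v <= X)%MS) => vX.
  by rewrite addn0 (addsmx_idPl vX).
have v0 : v != 0 by apply: contra vX => /eqP ->; rewrite sub0mx.
have := mxrank_sum_cap X v; rewrite rank_rV v0.
suff -> : \rank (X :&: v)%MS = 0%N by rewrite addn0 => ->.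
apply/eqP; rewrite mxrank_eq0 -submx0; apply: contraR vX => nz.
have : (v <= X :&: v)%MS.
  have le := mxrank_leqif_eq (capmxSr X v).
  have r1 : \rank (X :&: v)%MS = 1%N.
    have := mxrankS (capmxSr X v); rewrite rank_rV v0 /=.
    have : (0 < \rank (X :&: v)%MS)%N.
      by rewrite lt0n mxrank_eq0; apply: contra nz => /eqP ->; rewrite submx_refl.
    lia.
  have : (X :&: v == v)%MS by rewrite -(geq_leqif le) r1 rank_rV v0.
  by case/andP.
by rewrite sub_capmx => /andP [].
Qed.

Lemma kercoker m n (X : 'M[F]_(m,n)) : (kermx (cokermx X) :=: X)%MS.
Proof.
apply/eqmxP/andP; split.
  by rewrite submxE mulmx_ker.
by rewrite sub_kermx mulmx_coker.
Qed.

Lemma rank_mulcoker a m n (Y : 'M[F]_(a,n)) (X : 'M[F]_(m,n)) :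
  \rank (Y *m cokermx X) = (\rank (col_mx X Y) - \rank X)%N.
Proof.
have h1 := mxrank_mul_ker Y (cokermx X).
have h2 := mxrank_sum_cap Y X.
rewrite (cap_eqmx (eqmx_refl Y) (kercoker X)) in h1.
rewrite -addsmxE addsmxC; move: h1 h2.
move: (\rank (Y *m _)) (\rank (Y :&: X))%MS (\rank (Y + X))%MS (\rank X) (\rank Y); lia.
Qed.

Lemma card_pre a m n (Y : 'M[F]_(a,n)) (X : 'M[F]_(m,n)) :
  #|[set g : 'rV[F]_a | (g *m Y <= X)%MS]| =
  (q ^ (a - (\rank (col_mx X Y) - \rank X)))%N.
Proof.
rewrite -rank_mulcoker -mxrank_ker -card_subrow.
by apply: eq_card => g; rewrite !inE sub_kermx mulmxA -submxE.
Qed.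

End LA.
Section Alg.
Variable R : realFieldType.
Variable q : R.
Hypothesis q1 : 1 < q.

Lemma q0 : q != 0. Proof. by rewrite gt_eqF // (lt_trans ltr01 q1). Qed.

Lemma qexpD (e1 e2 e3 : int) : e1 = (e2 + e3)%R -> q ^ e1 = q ^ e2 * q ^ e3.
Proof. by move=> ->; rewrite expfzDr // q0. Qed.

Lemma qX1_neq0 (k : nat) : (0 < k)%N -> q ^+ k - 1 != 0.
Proof.
move=> k0; rewrite subr_eq0 gt_eqF //.
by rewrite exprn_egt1 // -lt0n k0.
Qed.

Lemma Pfull_S s k : Pfull q s.+1 k.+1 = (1 - q ^ (- (s.+1)%:Z)) * Pfull q s k.
Proof.
rewrite /Pfull big_nat_recl //; congr (_ * _); first by rewrite sub0r.
by apply: eq_big_nat => i _; congr (1 - q ^ _); lia.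
Qed.

Lemma Pfull_r s k : Pfull q s k.+1 = Pfull q s k * (1 - q ^ (k%:Z - s%:Z)).
Proof. by rewrite /Pfull big_nat_recr. Qed.

Lemma Pfull0 s : Pfull q s 0 = 1.
Proof. by rewrite /Pfull big_geq. Qed.

Lemma Pfull_rec s k :
  q ^+ k.+1 * Pfull q s.+1 k.+1 = Pfull q s k.+1 + (q ^+ k.+1 - 1) * Pfull q s k.
Proof.
rewrite Pfull_S Pfull_r.
have h : q ^+ k.+1 * q ^ (- (s.+1)%:Z) = q ^ (k%:Z - s%:Z).
  have -> : q ^+ k.+1 = q ^ (k.+1)%:Z by [].
  by rewrite -(@qexpD (k%:Z - s%:Z)) //; lia.
move: h; set a := q ^ (- _); set b := q ^ (_ - _) => h.
by rewrite -h; ring.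
Qed.

End Alg.
Section Alg2.
Variable R : realFieldType.
Variable q : R.
Hypothesis q1 : 1 < q.
Variable K : nat.

Lemma qz (e : int) (a b : nat) : e = (a%:Z - b%:Z)%R -> q ^ e = q ^+ a / q ^+ b.
Proof.
move=> ->; rewrite (@qexpD _ _ q1 _ a%:Z (- b%:Z)) //.
by rewrite -invr_expz.
Qed.

Definition Gq r := \prod_(0 <= i < r) ((q ^ (K%:Z - i%:Z) - 1) / (q ^ (r%:Z - i%:Z) - 1)).

Lemma Prank_eq r a : Prank q r a K = q ^ (- (a%:Z * (K%:Z - r%:Z))) * Gq r * Pfull q a r.
Proof. by []. Qed.

Lemma Gq_S r : Gq r.+1 = Gq r * ((q ^+ K / q ^+ r - 1) / (q ^+ r.+1 - 1)).
Proof.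
rewrite /Gq !prodf_div big_nat_recr // big_nat_recl //.
rewrite (@qz (K%:Z - r%:Z) K r) // (@qz (r.+1%:Z - 0%:Z) r.+1 0) // expr0 divr1.
have -> : \prod_(0 <= i < r) (q ^ (r.+1%:Z - i.+1%:Z) - 1) =
          \prod_(0 <= i < r) (q ^ (r%:Z - i%:Z) - 1).
  by apply: eq_big_nat => i _; congr (q ^ _ - 1); lia.
set P1 := \prod_(0 <= i < r) _.
set P2 := \prod_(0 <= i < r) _.
rewrite -[GRing.GRing_mul__canonical__Monoid_Law R _ _]/(_ * _).
rewrite -[GRing.GRing_mul__canonical__Monoid_Law R _ _]/(_ * _).
clearbody P1 P2; rewrite /= invfM; ring.
Qed.

Lemma Prank_rec0 n : q ^+ K * Prank q 0 n.+1 K = Prank q 0 n K.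
Proof.
rewrite !Prank_eq /Gq !big_geq // !Pfull0 !mulr1.
rewrite (@qz _ 0 (n.+1 * K)); last lia.
rewrite (@qz _ 0 (n * K)); last lia.
by rewrite mulSn exprD expr0 !mul1r invfM mulrA divff ?mul1r // expf_neq0 // (q0 q1).
Qed.

Lemma Prank_rec n r : q ^+ K * Prank q r.+1 n.+1 K =
  q ^+ r.+1 * Prank q r.+1 n K + (q ^+ K - q ^+ r) * Prank q r n K.
Proof.
rewrite !Prank_eq Gq_S (Pfull_S q1) (Pfull_r q n r).
rewrite (@qz (r%:Z - n%:Z) r n) //.
set A := q ^ (- (n%:Z * (K%:Z - r.+1%:Z))).
have -> : q ^ (- (n.+1%:Z * (K%:Z - r.+1%:Z))) = A * (q ^+ r.+1 / q ^+ K).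
  rewrite -(@qz (r.+1%:Z - K%:Z)) // /A -(@qexpD _ _ q1 (- (n.+1%:Z * (K%:Z - r.+1%:Z)))) //; lia.
have -> : q ^ (- (n%:Z * (K%:Z - r%:Z))) = A * (q ^+ 0 / q ^+ n).
  rewrite -(@qz (0%:Z - n%:Z)) // /A -(@qexpD _ _ q1 (- (n%:Z * (K%:Z - r%:Z)))) //; lia.
rewrite (@qz (- (n.+1%:Z)) 0 n.+1) //.
have qn0 : q != 0 := q0 q1.
have h1 : q ^+ r.+1 - 1 != 0 := qX1_neq0 q1 (ltn0Sn r).
move: h1; rewrite !exprS => h1.
have hr : q ^+ r != 0 by rewrite expf_neq0.
have hK : q ^+ K != 0 by rewrite expf_neq0.
have hn : q ^+ n != 0 by rewrite expf_neq0.
rewrite expr0.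
field.
  by rewrite hr hK hn h1 qn0.
by rewrite sub0r.
Qed.

End Alg2.
Section Sums.
Variable R : realFieldType.

Lemma sum_const_pred (T : finType) (Q : pred T) (c : R) :
  \sum_(x | Q x) c = #|Q|%:R * c.
Proof.
rewrite (eq_bigl (fun x => x \in Q)) // sumr_const.
by rewrite mulr_natl.
Qed.

Lemma sum_bool (T : finType) (P : pred T) (g : bool -> R) :
  \sum_(x : T) g (P x) = #|P|%:R * g true + (#|T| - #|P|)%N%:R * g false.
Proof.
rewrite (bigID P) /=.
rewrite (eq_bigr (fun _ => g true)); last by move=> x ->.
rewrite [X in _ + X](eq_bigr (fun _ => g false)); last by move=> x nP; rewrite (negbTE nP).
rewrite !sum_const_pred; congr (_ + _ * _).
by rewrite -(cardC P) addKn.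
Qed.

End Sums.
Section MxSums.
Variable F : finFieldType.
Variable R : realFieldType.
Local Notation qR := (#|F|%:R : R).

Lemma card_F_gt1 : (1 < #|F|)%N.
Proof. by apply/card_gt1P; exists 0, 1; split => //; rewrite eq_sym oner_neq0. Qed.

Lemma qR1 : 1 < qR.
Proof. by rewrite ltr1n card_F_gt1. Qed.

Lemma sum_colmx m n (f : 'M[F]_(m.+1, n) -> R) :
  \sum_(X : 'M[F]_(m.+1, n)) f X =
  \sum_(v : 'rV[F]_n) \sum_(X : 'M[F]_(m, n)) f (col_mx v X).
Proof.
rewrite pair_big /=.
rewrite (reindex (fun p : 'rV[F]_n * 'M[F]_(m, n) => (col_mx p.1 p.2 : 'M_(m.+1,n)))) //=.
exists (fun X : 'M[F]_(1 + m, n) => (usubmx X, dsubmx X)) => [[v X] _|X _] /=.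
  by rewrite col_mxKu col_mxKd.
by rewrite vsubmxK.
Qed.

Lemma rank_col_mxC m1 m2 n (A : 'M[F]_(m1,n)) (B : 'M[F]_(m2,n)) :
  \rank (col_mx A B) = \rank (col_mx B A).
Proof. by rewrite -!addsmxE addsmxC. Qed.

Lemma rank_col_mxA m1 m2 m3 n (A : 'M[F]_(m1,n)) (B : 'M[F]_(m2,n)) (C : 'M[F]_(m3,n)) :
  \rank (col_mx A (col_mx B C)) = \rank (col_mx (col_mx A B) C).
Proof.
have e1 : (col_mx A (col_mx B C) :=: A + (B + C))%MS.
  apply: eqmx_sym; apply: eqmx_trans (addsmxE _ _).
  exact: adds_eqmx (eqmx_refl A) (addsmxE B C).
have e2 : (col_mx (col_mx A B) C :=: (A + B) + C)%MS.
  apply: eqmx_sym; apply: eqmx_trans (addsmxE _ _).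
  exact: adds_eqmx (addsmxE A B) (eqmx_refl C).
by rewrite e1 e2 addsmxA.
Qed.

End MxSums.
Section RankCount.
Variable F : finFieldType.
Variable R : realFieldType.
Local Notation qR := (#|F|%:R : R).

Lemma Prank00 K : Prank qR 0 0 K = 1.
Proof. by rewrite /Prank !big_geq // mul0r oppr0 expr0z !mulr1. Qed.

Lemma Prank_S0 K r : Prank qR r.+1 0 K = 0.
Proof. by rewrite /Prank [X in _ * X]big_nat_recl // subrr !mul0r mulr0. Qed.

Lemma sum_rowsplit n K (X : 'M[F]_(n,K)) (g : nat -> R) :
  \sum_(v : 'rV[F]_K) g (\rank (col_mx v X)) =
  qR ^+ (\rank X) * g (\rank X) + (qR ^+ K - qR ^+ (\rank X)) * g (\rank X).+1.
Proof.
under eq_bigr => v _ do rewrite rank_col_mxC rank_addrow.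
rewrite (sum_bool (fun v : 'rV[F]_K => (v <= X)%MS) (fun b => g (\rank X + ~~ b)%N)) /=.
have c : #|(fun v : 'rV[F]_K => (v <= X)%MS)| = (#|F| ^ \rank X)%N.
  by rewrite -card_subrow; apply: eq_card => v; rewrite inE.
rewrite c addn0 addn1 card_mx mul1n natrB ?natrX //.
by rewrite leq_exp2l ?rank_leq_col // card_F_gt1.
Qed.

Lemma rank_count K n r :
  \sum_(X : 'M[F]_(n,K)) ((\rank X == r)%:R : R) = qR ^+ (n * K) * Prank qR r n K.
Proof.
elim: n r => [|n IH] r.
  rewrite (eq_bigr (fun _ => ((0%N == r)%:R : R))); last first.
    by move=> X _; rewrite (_ : \rank X = 0%N) //; apply/eqP; rewrite -leqn0 rank_leq_row.
  rewrite sumr_const card_mx mul0n expr0 mul1r.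
  by case: r => [|r]; rewrite ?Prank00 ?Prank_S0.
rewrite sum_colmx exchange_big /=.
under eq_bigr => X _ do rewrite (sum_rowsplit X (fun k => ((k == r)%:R : R))).
rewrite big_split /=.
case: r => [|r].
  rewrite (eq_bigr (fun X : 'M[F]_(n,K) => ((\rank X == 0%N)%:R : R))); last first.
    by move=> X _; case: eqP => [->|]; rewrite ?expr0 ?mul1r ?mulr0.
  rewrite [X in _ + X]big1 ?addr0; last by move=> X _; rewrite mulr0.
  rewrite IH -(Prank_rec0 (qR1 F R)) mulrA -exprD; congr (_ ^+ _ * _); lia.
rewrite (eq_bigr (fun X : 'M[F]_(n,K) => qR ^+ r.+1 * ((\rank X == r.+1)%:R : R))); last first.
  by move=> X _; case: eqP => [->|]; rewrite ?mulr0.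
rewrite [X in _ + X](eq_bigr (fun X : 'M[F]_(n,K) => (qR ^+ K - qR ^+ r) * ((\rank X == r)%:R : R))); last first.
  by move=> X _; rewrite eqSS; case: eqP => [->|]; rewrite ?mulr0.
rewrite -!mulr_sumr !IH.
have -> : (n.+1 * K)%N = (n * K + K)%N by rewrite mulSn addnC.
rewrite exprD -mulrA (Prank_rec (qR1 F R)); ring.
Qed.

End RankCount.
Section Core1.
Variable F : finFieldType.
Variable R : realFieldType.
Local Notation qR := (#|F|%:R : R).

Lemma Pfull0n (q : R) k : Pfull q 0 k.+1 = 0.
Proof. by rewrite /Pfull big_nat_recl // subrr mul0r. Qed.

Lemma rank_col_mx0 m n (X : 'M[F]_(m,n)) (Z : 'M[F]_(0,n)) : \rank (col_mx X Z) = \rank X.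
Proof. by rewrite (flatmx0 Z) -addsmxE addsmx0. Qed.

Lemma rank_col_le m1 m2 n (X : 'M[F]_(m1,n)) (Y : 'M[F]_(m2,n)) :
  (\rank X <= \rank (col_mx X Y))%N.
Proof. by rewrite -addsmxE mxrankS // addsmxSl. Qed.

Lemma rank_col_le2 m1 m2 n (X : 'M[F]_(m1,n)) (Y : 'M[F]_(m2,n)) :
  (\rank (col_mx X Y) <= \rank X + \rank Y)%N.
Proof. by rewrite -addsmxE; case: (mxrank_adds_leqif X Y). Qed.

Lemma rank_col_absorb m1 m2 m3 n (X : 'M[F]_(m1,n)) (Z : 'M[F]_(m2,n)) (Y : 'M[F]_(m3,n)) :
  (Z <= Y)%MS -> \rank (col_mx (col_mx X Z) Y) = \rank (col_mx X Y).
Proof.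
move=> ZY.
have e2 : (col_mx (col_mx X Z) Y :=: (X + Z) + Y)%MS.
  apply: eqmx_sym; apply: eqmx_trans (addsmxE _ _).
  exact: adds_eqmx (addsmxE X Z) (eqmx_refl Y).
by rewrite e2 -addsmxA (adds_eqmx (eqmx_refl X) (addsmx_idPr ZY)) addsmxE.
Qed.

Lemma core1 K a (Y : 'M[F]_(a,K)) m' : forall n (X : 'M[F]_(n,K)),
  \sum_(G : 'M[F]_(m',a)) ((\rank (col_mx X (G *m Y)) == K)%:R : R) =
  qR ^+ (m' * a) * ((\rank (col_mx X Y) == K)%:R * Pfull qR m' (K - \rank X)).
Proof.
elim: m' => [|m IH] n X.
  rewrite (eq_bigr (fun _ => ((\rank X == K)%:R : R))); last by move=> G _; rewrite rank_col_mx0.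
  rewrite sumr_const card_mx !mul0n expn0 expr0 mulr1n mul1r.
  have rX := rank_leq_col X.
  case: (ltnP (\rank X) K) => h.
    have -> : (K - \rank X)%N = (K - \rank X).-1.+1 by lia.
    by rewrite Pfull0n mulr0 (_ : (\rank X == K) = false) //; apply/negbTE; rewrite neq_ltn h.
  have eK : \rank X = K by apply/eqP; rewrite eqn_leq rX h.
  have eK2 : \rank (col_mx X Y) = K.
    by apply/eqP; rewrite eqn_leq rank_leq_col -{1}eK rank_col_le.
  by rewrite eK eK2 subnn Pfull0 eqxx mulr1.
rewrite sum_colmx.
under eq_bigr => g _.
  under eq_bigr => G _ do rewrite (mul_col_mx (m1:=1)) (@rank_col_mxA _ n 1 m).
  rewrite IH rank_col_absorb ?submxMl // rank_addrow.
  over.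
rewrite /= (sum_bool (fun g : 'rV[F]_a => (g *m Y <= X)%MS)
  (fun b => qR ^+ (m * a) * ((\rank (col_mx X Y) == K)%:R * Pfull qR m (K - (\rank X + ~~ b)))))/=.
have c : #|(fun g : 'rV[F]_a => (g *m Y <= X)%MS)| = (#|F| ^ (a - (\rank (col_mx X Y) - \rank X)))%N.
  by rewrite -card_pre; apply: eq_card => v; rewrite inE.
rewrite c card_mx mul1n.
case: (boolP (\rank (col_mx X Y) == K)) => hK; last by rewrite !mul0r !mulr0 addr0.
rewrite (eqP hK) !mul1r addn0 addn1.
have rX := rank_leq_col X.
have ka : (K - \rank X <= a)%N.
  have := rank_col_le2 X Y; rewrite (eqP hK); have := rank_leq_row Y; lia.
rewrite natrB ?leq_exp2l ?leq_subr ?card_F_gt1 // !natrX.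
case eK: (K - \rank X)%N => [|k].
  have -> : (K - (\rank X).+1)%N = 0%N by lia.
  by rewrite !Pfull0 subn0 subrr mul0r addr0 !mulr1 mulSn exprD.
have -> : (K - (\rank X).+1)%N = k by lia.
have e : qR ^+ a = qR ^+ (a - k.+1) * qR ^+ k.+1 by rewrite -exprD subnK // -eK.
rewrite mulSn exprD e.
have hr := Pfull_rec (qR1 F R) m k.
transitivity (qR ^+ (a - k.+1) * qR ^+ (m * a) * (qR ^+ k.+1 * Pfull qR m.+1 k.+1)); last by ring.
rewrite hr; ring.
Qed.

End Core1.
Section Push.
Variable F : finFieldType.
Variable R : realFieldType.
Local Notation qR := (#|F|%:R : R).

Lemma sum_ind (T : finType) (P : pred T) : \sum_(x : T) ((P x)%:R : R) = #|P|%:R.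
Proof. by rewrite (sum_bool P (fun b => (b%:R : R))) mulr1 mulr0 addr0. Qed.

Lemma qRn0 : qR != 0.
Proof. by rewrite gt_eqF // (lt_trans ltr01 (qR1 F R)). Qed.

Lemma pushmul p N k (S : 'M[F]_(p,N)) (f : 'M[F]_(p,k) -> R) : row_free S ->
  \sum_(C : 'M[F]_(N,k)) f (S *m C) = qR ^+ ((N - p) * k) * \sum_(Z : 'M[F]_(p,k)) f Z.
Proof.
move=> fS; have [T ST] := row_freeP fS.
have gen : forall g : 'M[F]_(p,k) -> R, \sum_(C : 'M[F]_(N,k)) g (S *m C) =
    #|[set C : 'M[F]_(N,k) | S *m C == 0]|%:R * \sum_(Z : 'M[F]_(p,k)) g Z.
  move=> g.
  rewrite (eq_bigr (fun C => \sum_(Z : 'M[F]_(p,k)) ((S *m C == Z)%:R * g Z))); last first.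
    move=> C _; rewrite (bigD1 (S *m C)) //= eqxx mul1r big1 ?addr0 // => Z.
    by rewrite eq_sym => /negbTE ->; rewrite mul0r.
  rewrite exchange_big mulr_sumr; apply: eq_bigr => Z _.
  rewrite -mulr_suml sum_ind; congr (_%:R * _).
  have -> : [set C : 'M[F]_(N,k) | S *m C == 0] =
     (fun C => C - T *m Z) @: [set C : 'M[F]_(N,k) | S *m C == Z].
    apply/setP => C; rewrite inE; apply/idP/imsetP.
      move=> /eqP SC0; exists (C + T *m Z); last by rewrite addrK.
      by rewrite inE mulmxDr SC0 add0r mulmxA ST mul1mx.
    by move=> [C' ]; rewrite inE => /eqP SC' ->; rewrite mulmxBr SC' mulmxA ST mul1mx subrr.
  rewrite card_imset; last by move=> x y /addIr.
  by apply: eq_card => C; rewrite inE.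
have c1 := gen (fun _ => (1 : R)).
rewrite !sumr_const !card_mx in c1.
rewrite gen; congr (_ * _).
have pN : (p <= N)%N by have := rank_leq_col S; rewrite (eqP fS).
apply: (@mulIf _ (qR ^+ (p * k))); first by rewrite expf_neq0 // qRn0.
rewrite -exprD -mulnDl subnK //.
move: c1; rewrite -!natrX => c1.
by rewrite c1.
Qed.

Definition selmx N (D : {set 'I_N}) : 'M[F]_(#|D|, N) :=
  rowsub (fun i : 'I_#|D| => enum_val i) 1%:M.

Lemma rows_ofE N K (D : {set 'I_N}) (C : 'M[F]_(N,K)) : rows_of D C = selmx D *m C.
Proof. by rewrite /rows_of rowsubE. Qed.

Lemma selmx_mul N (D B : {set 'I_N}) i j :
  (selmx D *m (selmx B)^T) i j = ((enum_val i == enum_val j)%:R : F).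
Proof.
by rewrite /selmx trmx_mxsub trmx1 -mxsub_mul mul1mx !mxE.
Qed.

Lemma selmx_id N (D : {set 'I_N}) : selmx D *m (selmx D)^T = 1%:M.
Proof.
apply/matrixP => i j; rewrite selmx_mul !mxE.
by rewrite (inj_eq enum_val_inj).
Qed.

Lemma selmx_disj N (D B : {set 'I_N}) : [disjoint D & B] -> selmx D *m (selmx B)^T = 0.
Proof.
move=> dDB; apply/matrixP => i j; rewrite selmx_mul !mxE.
case: eqP => // e; have := enum_valP i; have := enum_valP j; rewrite -e.
by move=> h1 h2; move/disjoint_setI0: dDB => /setP /(_ (enum_val i)); rewrite !inE h1 h2.
Qed.

Lemma selmx_free N (D : {set 'I_N}) : row_free (selmx D).
Proof. by apply/row_freeP; exists (selmx D)^T; exact: selmx_id. Qed.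

Lemma selmx2_free N (D B : {set 'I_N}) : [disjoint D & B] ->
  row_free (col_mx (selmx D) (selmx B)).
Proof.
move=> dDB; apply/row_freeP; exists (row_mx (selmx D)^T (selmx B)^T).
rewrite mul_col_row !selmx_id selmx_disj // selmx_disj; last by rewrite disjoint_sym.
by rewrite -scalar_mx_block.
Qed.

End Push.
Section SR.
Variable R : realFieldType.

Lemma sum_restrict n lo hi (G : nat -> R) : (hi <= n)%N ->
  (forall i, (i < n)%N -> ~~ ((lo <= i) && (i < hi))%N -> G i = 0) ->
  \sum_(0 <= i < n) G i = \sum_(lo <= i < hi) G i.
Proof.
move=> hn h0.
case: (leqP hi lo) => hl.
  rewrite [RHS]big_geq // big1_seq // => i; rewrite mem_index_iota => /andP [_ /andP [_ iN]].
  by apply: h0 => //; apply/negP => /andP [a b]; lia.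
rewrite (big_cat_nat (n := lo)) //=; last by rewrite (leq_trans (ltnW hl)).
rewrite (big_cat_nat (n := hi) (m := lo)) //= ?(ltnW hl) //.
rewrite [X in X + _]big1_seq ?add0r; last first.
  move=> i; rewrite mem_index_iota => /andP [_ /andP [_ il]]; apply: h0.
    by rewrite (leq_trans il) // (leq_trans (ltnW hl)).
  by apply/negP => /andP [a b]; lia.
rewrite [X in _ + X]big1_seq ?addr0 // => i; rewrite mem_index_iota => /andP [_ /andP [hi' iN]].
by apply: h0 => //; apply/negP => /andP [a b]; lia.
Qed.

End SR.

Section P2eq.
Variable R : realFieldType.
Variable q : R.
Hypothesis q1 : 1 < q.

Lemma Pfull_lt s k : (s < k)%N -> Pfull q s k = 0.
Proof.
move=> sk; rewrite /Pfull (big_cat_nat (n := s)) ?(ltnW sk) //= [X in _ * X]big_ltn //.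
by rewrite subrr expr0z subrr mul0r mulr0.
Qed.

Lemma Prank_gt i d K : (K < i)%N -> Prank q i d K = 0.
Proof.
move=> Ki; rewrite Prank_eq /Gq (big_cat_nat (n := K)) ?(ltnW Ki) //=.
by rewrite [X in _ * (_ * X) * _]big_ltn // subrr expr0z subrr mul0r mul0r mulr0 mulr0 mul0r.
Qed.

Lemma P2_eq d b e K :
  \sum_(i < d.+1) Prank q i d K * Pfull q e (K - i) * Pfull q b (K - i) =
  P2 q (e + d) (b + d) d K.
Proof.
rewrite /P2 !addnK -(big_mkord xpredT (fun i => Prank q i d K * Pfull q e (K - i) * Pfull q b (K - i))).
apply: sum_restrict; first by rewrite ltnS geq_minl.
move=> i id nH.
case: (ltnP e (K - i)) => he; first by rewrite (Pfull_lt he) mulr0 mul0r.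
case: (ltnP b (K - i)) => hb; first by rewrite (Pfull_lt hb) mulr0.
have Ki : (K < i)%N.
  move: nH; rewrite negb_and -!ltnNge => /orP [h|h]; lia.
by rewrite Prank_gt // !mul0r.
Qed.

End P2eq.
Section CoreT.
Variable F : finFieldType.
Variable R : realFieldType.
Local Notation qR := (#|F|%:R : R).

Lemma sum_col2 m1 m2 n (f : 'M[F]_(m1 + m2, n) -> R) :
  \sum_(Z : 'M[F]_(m1 + m2, n)) f Z =
  \sum_(X : 'M[F]_(m1, n)) \sum_(Y : 'M[F]_(m2, n)) f (col_mx X Y).
Proof.
rewrite pair_big /=.
rewrite (reindex (fun p : 'M[F]_(m1, n) * 'M[F]_(m2, n) => col_mx p.1 p.2)) //=.
exists (fun X : 'M[F]_(m1 + m2, n) => (usubmx X, dsubmx X)) => [[v X] _|X _] /=.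
  by rewrite col_mxKu col_mxKd.
by rewrite vsubmxK.
Qed.

Lemma sum_by_rank d K (g : nat -> R) :
  \sum_(X : 'M[F]_(d,K)) g (\rank X) =
  \sum_(i < d.+1) qR ^+ (d * K) * Prank qR i d K * g i.
Proof.
rewrite (eq_bigr (fun X : 'M[F]_(d,K) => \sum_(i < d.+1) ((\rank X == i)%:R * g i))); last first.
  move=> X _; rewrite (bigD1 (Ordinal (rank_leq_row X : (\rank X < d.+1)%N))) //= eqxx mul1r.
  rewrite big1 ?addr0 // => i /negbTE; rewrite eq_sym -(inj_eq val_inj) /= => ->.
  by rewrite mul0r.
rewrite exchange_big; apply: eq_bigr => i _.
by rewrite -mulr_suml rank_count.
Qed.

Lemma row_in_rows N K (S : {set 'I_N}) (C : 'M[F]_(N,K)) j :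
  j \in S -> (row j C <= rows_of S C)%MS.
Proof.
move=> jS; rewrite -(enum_rankK_in jS jS) /rows_of -row_rowsub; exact: row_sub.
Qed.

Lemma sub_col_l m1 m2 m3 n (M : 'M[F]_(m1,n)) (P : 'M[F]_(m2,n)) (Q : 'M[F]_(m3,n)) :
  (M <= P)%MS -> (M <= col_mx P Q)%MS.
Proof. by move=> h; apply: submx_trans h _; rewrite -addsmxE addsmxSl. Qed.

Lemma sub_col_r m1 m2 m3 n (M : 'M[F]_(m1,n)) (P : 'M[F]_(m2,n)) (Q : 'M[F]_(m3,n)) :
  (M <= Q)%MS -> (M <= col_mx P Q)%MS.
Proof. by move=> h; apply: submx_trans h _; rewrite -addsmxE addsmxSr. Qed.

Lemma rank_DA N K (A D : {set 'I_N}) (C : 'M[F]_(N,K)) :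
  \rank (col_mx (rows_of D C) (rows_of A C)) =
  \rank (col_mx (rows_of D C) (rows_of (A :\: D) C)).
Proof.
apply/eqmx_rank/andP; split; rewrite col_mx_sub.
  rewrite sub_col_l ?submx_refl //=; apply/row_subP => k.
  rewrite /rows_of row_rowsub -/(rows_of A C).
  have := enum_valP k; set j := enum_val k => jA.
  case: (boolP (j \in D)) => jD; first by apply: sub_col_l; exact: row_in_rows.
  by apply: sub_col_r; apply: row_in_rows; rewrite inE jD jA.
rewrite sub_col_l ?submx_refl //=; apply/row_subP => k.
rewrite /rows_of row_rowsub -/(rows_of (A :\: D) C).
have := enum_valP k; set j := enum_val k; rewrite inE => /andP [_ jA].
by apply: sub_col_r; exact: row_in_rows.
Qed.

End CoreT.
Section CoreT2.
Variable F : finFieldType.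
Variable R : realFieldType.
Local Notation qR := (#|F|%:R : R).

Lemma card_set_le N (S : {set 'I_N}) : (#|S| <= N)%N.
Proof. by have := max_card S; rewrite card_ord. Qed.

Lemma qXn0 k : qR ^+ k != 0.
Proof. by rewrite expf_neq0 // qRn0. Qed.

Lemma avgG K NR NS (A D : {set 'I_NS}) (E : {set 'I_NR}) (C : 'M[F]_(NS,K)) :
  unif_avg (fun G : 'M[F]_(NR, #|A|) =>
    ((\rank (col_mx (rows_of D C) (rows_of E (G *m rows_of A C))) == K :> nat)%:R : R))
  = ((\rank (col_mx (rows_of D C) (rows_of A C)) == K)%:R) *
    Pfull qR #|E| (K - \rank (rows_of D C)).
Proof.
rewrite /unif_avg card_mx.
under eq_bigr => G _ do rewrite [rows_of E _]rows_ofE mulmxA.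
rewrite (pushmul (fun Z => ((\rank (col_mx (rows_of D C) (Z *m rows_of A C)) == K)%:R : R))
   (selmx_free F E)).
rewrite core1 mulrA -exprD -mulnDl subnK ?card_set_le // natrX mulKf //.
exact: qXn0.
Qed.

Lemma rank_col1 n K (X : 'M[F]_(n,K)) : \rank (col_mx X (1%:M : 'M_K)) = K.
Proof.
apply/eqP; rewrite eqn_leq rank_leq_col /=.
by rewrite -{1}(mxrank1 F K) rank_col_mxC rank_col_le.
Qed.

Lemma core1b K b n (X : 'M[F]_(n,K)) :
  \sum_(Y : 'M[F]_(b,K)) ((\rank (col_mx X Y) == K)%:R : R) =
  qR ^+ (b * K) * Pfull qR b (K - \rank X).
Proof.
rewrite (eq_bigr (fun Y : 'M[F]_(b,K) => ((\rank (col_mx X (Y *m 1%:M)) == K)%:R : R))).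
  by rewrite core1 rank_col1 eqxx mul1r.
by move=> Y _; rewrite mulmx1.
Qed.

Lemma coreT K NR NS (A D : {set 'I_NS}) (E : {set 'I_NR}) :
  unif_avg (fun C : 'M[F]_(NS,K) => unif_avg (fun G : 'M[F]_(NR, #|A|) =>
    ((\rank (col_mx (rows_of D C) (rows_of E (G *m rows_of A C))) == K :> nat)%:R : R)))
  = P2 qR (#|E| + #|D|) (#|A| - #|A :&: D| + #|D|) #|D| K.
Proof.
rewrite {1}/unif_avg.
under eq_bigr => C _ do rewrite avgG rank_DA !rows_ofE.
set B := A :\: D.
have dDB : [disjoint D & B] by rewrite disjoints_subset; apply/subsetP => x xD; rewrite !inE xD.
set S := col_mx (selmx F D) (selmx F B).
pose f := fun Z : 'M[F]_(#|D| + #|B|, K) =>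
   ((\rank Z == K)%:R : R) * Pfull qR #|E| (K - \rank (usubmx Z)).
rewrite (eq_bigr (fun C => f (S *m C))); last first.
  by move=> C _; rewrite /f /S mul_col_mx col_mxKu.
rewrite (pushmul f (selmx2_free F dDB)) sum_col2 /f.
under eq_bigr => X _.
  under eq_bigr => Y _ do rewrite col_mxKu.
  rewrite -mulr_suml core1b mulrC.
  over.
rewrite /= (@sum_by_rank F R _ _ (fun i => Pfull qR #|E| (K - i) * (qR ^+ (#|B| * K) * Pfull qR #|B| (K - i)))).
have le : (#|D| + #|B| <= NS)%N.
  have := cardsUI D B; rewrite disjoint_setI0 // cards0 addn0 => <-.
  exact: card_set_le.
rewrite card_mx -cardsD -(P2_eq (qR1 F R)).
rewrite !mulr_sumr; apply: eq_bigr => i _.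
have -> : (#|F| ^ (NS * K))%N%:R = qR ^+ ((NS - (#|D| + #|B|)) * K) * qR ^+ (#|D| * K) * qR ^+ (#|B| * K).
  by rewrite natrX -!exprD -!mulnDl -addnA subnK.
field; rewrite !qXn0 //.
Qed.

End CoreT2.
Section Comb.

Lemma count_D N (A : {set 'I_N}) mD k : (k <= mD)%N ->
  #|[set D : {set 'I_N} | (#|D| == mD) && (#|A :&: D| == k)]| =
  ('C(#|A|, k) * 'C(N - #|A|, mD - k))%N.
Proof.
move=> kmD.
set S1 := [set D1 : {set 'I_N} | D1 \subset A & #|D1| == k].
set S2 := [set D2 : {set 'I_N} | D2 \subset ~: A & #|D2| == (mD - k)%N].
have c1 : #|S1| = 'C(#|A|, k) by rewrite cards_draws.
have c2 : #|S2| = 'C(N - #|A|, mD - k).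
  by rewrite cards_draws; congr 'C(_, _); have := cardsC A; rewrite card_ord; lia.
have key : forall p : {set 'I_N} * {set 'I_N}, p \in setX S1 S2 ->
    A :&: (p.1 :|: p.2) = p.1 /\ (p.1 :|: p.2) :\: A = p.2.
  move=> [p1 p2]; rewrite !inE /= => /and3P [/andP [s1 _] s2 _].
  split; apply/setP => x; rewrite !inE.
    case xp1: (x \in p1); first by rewrite (subsetP s1 x xp1).
    case xA: (x \in A) => //=; apply/negP => xp2.
    by have := subsetP s2 x xp2; rewrite inE xA.
  case xp2: (x \in p2).
    by have := subsetP s2 x xp2; rewrite inE => ->; rewrite orbT.
  case xA: (x \in A) => //=; rewrite orbF; apply/negP => xp1.
  by have := subsetP s1 x xp1; rewrite xA.
have -> : [set D : {set 'I_N} | (#|D| == mD) && (#|A :&: D| == k)] =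
    (fun p => p.1 :|: p.2) @: setX S1 S2.
  apply/setP => D; rewrite inE; apply/idP/imsetP.
    move=> /andP [/eqP hD /eqP hk]; exists (A :&: D, D :\: A).
      rewrite !inE subsetIl hk eqxx /=; apply/andP; split.
        by apply/subsetP => x; rewrite !inE => /andP [->].
      by rewrite cardsD setIC hD hk.
    by rewrite /= setIC setID.
  move=> [p pin ->]; have [e1 _] := key p pin.
  move: pin; rewrite !inE => /and3P [/andP [s1 /eqP h1] s2 /eqP h2].
  rewrite e1 h1 eqxx andbT.
  have := cardsUI p.1 p.2.
  have -> : p.1 :&: p.2 = set0.
    apply/setP => x; rewrite !inE; apply/negP => /andP [x1 x2].
    by have := subsetP s2 x x2; rewrite inE (subsetP s1 x x1).
  by rewrite cards0 addn0 h1 h2 => ->; rewrite subnKC.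
rewrite card_in_imset; last first.
  move=> [p1 q1] [p2 q2] h1 h2 /= e.
  have [a1 b1] := key _ h1; have [a2 b2] := key _ h2.
  simpl in a1, b1, a2, b2.
  have E1 : p1 = p2 by rewrite -a1 -a2 e.
  have E2 : q1 = q2 by rewrite -b1 -b2 e.
  by rewrite E1 E2.
by rewrite cardsX c1 c2.
Qed.

End Comb.
Section Group.
Variable R : realFieldType.

Lemma pick_sum n x (g : nat -> R) : (x < n)%N -> g x = \sum_(i < n) ((x == i)%:R * g i).
Proof.
move=> h; rewrite (bigD1 (Ordinal h)) //= eqxx mul1r big1 ?addr0 // => i.
by move/negbTE; rewrite eq_sym -(inj_eq val_inj) /= => ->; rewrite mul0r.
Qed.

Lemma card_set_lt N (S : {set 'I_N}) : (#|S| < N.+1)%N.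
Proof. by rewrite ltnS; have := max_card S; rewrite card_ord. Qed.

Lemma sum_ind' (T : finType) (P : pred T) : \sum_(x : T) ((P x)%:R : R) = #|P|%:R.
Proof. by rewrite (sum_bool P (fun b => (b%:R : R))) mulr1 mulr0 addr0. Qed.

Lemma sum_card N (f : nat -> R) :
  \sum_(E : {set 'I_N}) f #|E| = \sum_(k < N.+1) 'C(N,k)%:R * f k.
Proof.
rewrite (eq_bigr (fun E : {set 'I_N} => \sum_(i < N.+1) ((#|E| == i)%:R * f i))); last first.
  by move=> E _; rewrite -pick_sum // card_set_lt.
rewrite exchange_big; apply: eq_bigr => k _.
rewrite -mulr_suml sum_ind'; congr (_%:R * _).
have := card_draws 'I_N k; rewrite card_ord => <-.
by apply: eq_card => E; rewrite inE.
Qed.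

Lemma indM (a b : bool) : (a%:R * b%:R : R) = (a && b)%:R.
Proof. by case: a; case: b; rewrite ?mul1r ?mul0r. Qed.

Lemma sum_D N (A : {set 'I_N}) (G : nat -> nat -> R) :
  \sum_(D : {set 'I_N}) G #|D| #|A :&: D| =
  \sum_(mD < N.+1) \sum_(k < N.+1)
    (((k <= mD)%N)%:R * ('C(#|A|, k) * 'C(N - #|A|, mD - k))%:R) * G mD k.
Proof.
rewrite (eq_bigr (fun D : {set 'I_N} => \sum_(mD < N.+1) \sum_(k < N.+1)
   (((#|D| == mD) && (#|A :&: D| == k))%:R * G mD k))); last first.
  move=> D _; rewrite (pick_sum (fun mD => G mD #|A :&: D|) (card_set_lt D)).
  apply: eq_bigr => mD _; rewrite (pick_sum (fun k => G mD k) (card_set_lt (A :&: D))).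
  by rewrite mulr_sumr; apply: eq_bigr => k _; rewrite mulrA indM.
rewrite exchange_big; apply: eq_bigr => mD _.
rewrite exchange_big; apply: eq_bigr => k _.
rewrite -mulr_suml sum_ind'; congr (_ * _).
case: (leqP k mD) => h.
  rewrite mul1r -count_D //; congr (_%:R); apply: eq_card => D; rewrite inE //.
rewrite mul0r; apply/eqP; rewrite pnatr_eq0; apply/eqP; apply: eq_card0 => D.
apply/negP => /andP [/eqP d1 /eqP d2].
have := subset_leq_card (subsetIr A D); rewrite d1 d2; lia.
Qed.

Lemma sum_AD N (G : nat -> nat -> nat -> R) :
  \sum_(A : {set 'I_N}) \sum_(D : {set 'I_N}) G #|A| #|D| #|A :&: D| =
  \sum_(m < N.+1) 'C(N, m)%:R * \sum_(mD < N.+1) \sum_(k < N.+1)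
    (((k <= mD)%N)%:R * ('C(m, k) * 'C(N - m, mD - k))%:R) * G m mD k.
Proof.
rewrite (eq_bigr (fun A : {set 'I_N} => (fun m => \sum_(mD < N.+1) \sum_(k < N.+1)
    (((k <= mD)%N)%:R * ('C(m, k) * 'C(N - m, mD - k))%:R) * G m mD k) #|A|)); last first.
  by move=> A _; rewrite sum_D.
by rewrite -(@sum_card N (fun m => \sum_(mD < N.+1) \sum_(k < N.+1)
    (((k <= mD)%N)%:R * ('C(m, k) * 'C(N - m, mD - k))%:R) * G m mD k)).
Qed.

End Group.
Lemma bin_swap N m k : (k <= m)%N -> (m <= N)%N ->
  ('C(N,m) * 'C(m,k) = 'C(N,k) * 'C(N-k, m-k))%N.
Proof.
move=> km mN.
have h1 := bin_fact km.
have h2 := bin_fact mN.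
have kN : (k <= N)%N by apply: leq_trans km mN.
have h3 := bin_fact kN.
have h4 : (m - k <= N - k)%N by lia.
have h5 := bin_fact h4.
have e : (N - k - (m - k) = N - m)%N by lia.
rewrite e in h5.
apply/eqP; rewrite -(@eqn_pmul2r (k`! * (m-k)`! * (N-m)`!)); last by rewrite !muln_gt0 !fact_gt0.
apply/eqP; transitivity N`!.
  by rewrite -h2 -h1; ring.
by rewrite -h3 -h5; ring.
Qed.

Section Main.
Variable R : realFieldType.

Lemma avg_sum (T I : finType) (f : I -> T -> R) :
  unif_avg (fun x => \sum_i f i x) = \sum_i unif_avg (f i).
Proof. by rewrite /unif_avg exchange_big mulr_sumr. Qed.

Lemma avg_scale (T : finType) (c : R) (f : T -> R) :
  unif_avg (fun x => c * f x) = c * unif_avg f.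
Proof. by rewrite /unif_avg -mulr_sumr mulrCA. Qed.

Lemma P2_empty (q : R) m1 m2 m12 K :
  (minn m12 K < maxn (K + m12 - m1) (K + m12 - m2))%N -> P2 q m1 m2 m12 K = 0.
Proof. by move=> h; rewrite /P2 big_geq. Qed.

Definition Phi (q e : R) (K NR m mD k : nat) :=
  \sum_(m' < NR.+1) Bin m' NR e * P2 q (m' + mD) (m - k + mD) mD K.

Lemma sumE_step (q eps : R) NR b c K (w : R) :
  \sum_(E : {set 'I_NR}) w * erasure_wt eps E * P2 q (#|E| + c) b c K =
  w * \sum_(m' < NR.+1) Bin m' NR eps * P2 q (m' + c) b c K.
Proof.
rewrite (eq_bigr (fun E : {set 'I_NR} => w * ((fun k => (1 - eps) ^+ k * eps ^+ (NR - k) *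
   P2 q (k + c) b c K) #|E|))); last by move=> E _; rewrite /erasure_wt /= !mulrA.
rewrite -mulr_sumr (@sum_card R NR (fun k => (1 - eps) ^+ k * eps ^+ (NR - k) *
   P2 q (k + c) b c K)); congr (_ * _); apply: eq_bigr => k _.
by rewrite /Bin !mulrA.
Qed.

Lemma Phi0 (q e : R) K NR m mD k : (m + mD < K)%N -> Phi q e K NR m mD k = 0.
Proof.
move=> h; rewrite /Phi big1 // => m' _; rewrite P2_empty ?mulr0 //; lia.
Qed.

Lemma Phi_eq (q e : R) K NR m mD k :
  \sum_(K - mD <= m' < NR.+1) Bin m' NR e * P2 q (m' + mD) (m - k + mD) mD K =
  Phi q e K NR m mD k.
Proof.
rewrite /Phi -(big_mkord xpredT (fun m' => Bin m' NR e * P2 q (m' + mD) (m - k + mD) mD K)).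
symmetry; apply: sum_restrict => // m' hm h.
rewrite P2_empty ?mulr0 //.
move: h; rewrite negb_and -!ltnNge => /orP [h|h]; lia.
Qed.

End Main.
Unset Implicit Arguments. Set Strict Implicit.
Theorem mainTheorem4 (R : realFieldType) (F : finFieldType) (K NS NR : nat)
    (eSD eSR eRD : R) :
  (1 <= K)%N -> (K <= NS)%N -> (1 <= NR)%N ->
  0 <= eSD <= 1 -> 0 <= eSR <= 1 -> 0 <= eRD <= 1 ->
  P1R F K NS NR eSD eSR eRD = P1R_formula (#|F|%:R : R) K NS NR eSD eSR eRD.
Proof.
move=> _ _ _ _ _ _.
set q := (#|F|%:R : R).
rewrite /P1R avg_sum.
under eq_bigr => A _ do rewrite avg_sum.
under eq_bigr => A _ do under eq_bigr => D _ do rewrite avg_sum.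
under eq_bigr => A _ do under eq_bigr => D _ do under eq_bigr => E _ do rewrite avg_scale coreT.
under eq_bigr => A _ do under eq_bigr => D _ do rewrite sumE_step -/(Phi q eRD K NR #|A| #|D| #|A :&: D|).
pose G := fun m mD k => ((1 - eSR) ^+ m * eSR ^+ (NS - m)) * ((1 - eSD) ^+ mD * eSD ^+ (NS - mD)) *
   Phi q eRD K NR m mD k.
rewrite (eq_bigr (fun A : {set 'I_NS} => \sum_(D : {set 'I_NS}) G #|A| #|D| #|A :&: D|)); last first.
  by move=> A _; apply: eq_bigr => D _; rewrite /G /erasure_wt.
rewrite sum_AD /P1R_formula.
apply: eq_bigr => m _.
have mN : (m <= NS)%N by rewrite -ltnS ltn_ord.
rewrite mulr_sumr [RHS]big_mkcond /=; apply: eq_bigr => mD _.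
have mDN : (mD <= NS)%N by rewrite -ltnS ltn_ord.
case: ifP => hK; last first.
  rewrite big1 ?mulr0 // => k _.
  by rewrite /G Phi0 ?mulr0 //; move/negbT: hK; rewrite -ltnNge.
rewrite mulr_sumr -(big_mkord xpredT (fun k => 'C(NS,m)%:R * (((k <= mD)%N)%:R *
   ('C(m,k) * 'C(NS-m, mD-k))%:R * G m mD k))).
rewrite (@sum_restrict R NS.+1 (m + mD - NS) (minn m mD).+1); first last.
- move=> k kN nH.
  have [z|z] : ('C(m,k) * 'C(NS - m, mD - k))%N = 0%N \/ (k <= mD)%N = false.
    case: (leqP k mD) => h1; last by right; apply/negbTE; lia.
    left; case: (leqP k m) => h2; last by rewrite bin_small.
    rewrite (@bin_small (NS - m)) ?muln0 //.
    move: nH; rewrite negb_and -!ltnNge => /orP [h|h]; lia.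
    by rewrite z mulr0n mulr0 mul0r mulr0.
  by rewrite z mul0r mul0r mulr0.
- by rewrite ltnS (leq_trans (geq_minl _ _)) // ltnW.
apply: eq_big_nat => k /andP [klo khi].
have kmD : (k <= mD)%N by move: khi; rewrite ltnS leq_min => /andP [].
have km : (k <= m)%N by move: khi; rewrite ltnS leq_min => /andP [].
rewrite kmD mul1r Phi_eq natrM.
have hb : ('C(NS,m)%:R * 'C(m,k)%:R : R) = 'C(NS,k)%:R * 'C(NS-k,m-k)%:R.
  by rewrite -!natrM bin_swap.
transitivity (('C(NS,m)%:R * 'C(m,k)%:R) * 'C(NS-m,mD-k)%:R * G m mD k); first by ring.
by rewrite hb /G /alpha; ring.
Qed.
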